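(* Fix $n \ge 1$ and finite sets $\mathsf{AP}^I_L$, $\mathsf{AP}^O$, and let $\mathcal{I} = 2^{\mathsf{AP}^I_L \times \{0,\dots,n-1\}}$ and $\mathcal{O} = 2^{\mathsf{AP}^O \times \{0,\dots,n-1\}}$. A computation tree $\langle \mathcal{I}^*, \tau\rangle$ with $\tau : \mathcal{I}^* \to \mathcal{O}$ is regular and has the symmetry property if and only if it is the computation tree induced by the rotation-symmetric architecture with $n$ processes for some finite-state process implementation (Moore machine) $\mathcal{M}$ with input alphabet $\mathcal{I}$ and output alphabet $2^{\mathsf{AP}^O}$.
   Context: All indices are taken modulo $n$, where the modulo function always returns a value in $\{0,\dots,n-1\}$. For a set $\mathsf{AP}$, $U = 2^{\mathsf{AP}\times\{0,\dots,n-1\}}$ and $k \in \mathbb{Z}$, define $\mathrm{rot}(u,k) = \{(p,(j+k) \bmod n) \mid (p,j) \in u\}$ for $u \in U$; $\mathrm{rot}$ is extended letterwise to finite and infinite words over $U$. A computation tree is a map $\tau : \mathcal{I}^* \to \mathcal{O}$ (the label $\tau(t)$ is the output after reading the input sequence $t$). For $\hat t \in \mathcal{I}^*$, the subtree at $\hat t$ is the tree $t \mapsto \tau(\hat t t)$; the tree is regular if it has only finitely many distinct subtrees. The tree has the symmetry property if $\tau(\mathrm{rot}(t,i)) = \mathrm{rot}(\tau(t),i)$ for all $t \in \mathcal{I}^*$ and $0 \le i < n$. A Moore machine is $\mathcal{M} = (S,\mathcal{I},O,\delta,s_0,L)$ with finite state set $S$, transition function $\delta : S\times\mathcal{I}\to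 S$, initial state $s_0$ and labelling $L : S \to O$, where $O = 2^{\mathsf{AP}^O}$. The rotation-symmetric architecture with $n$ processes runs $n$ copies $p_0,\dots,p_{n-1}$ of $\mathcal{M}$ synchronously: the composed machine has states $S^n$, initial state $(s_0,\dots,s_0)$, transition $\delta'((s_0',\dots,s_{n-1}'),x) = (\delta(s_0',\mathrm{rot}(x,0)),\delta(s_1',\mathrm{rot}(x,-1)),\dots,\delta(s_{n-1}',\mathrm{rot}(x,-(n-1))))$ for $x \in \mathcal{I}$ (process $j$ sees the global input rotated by $-j$), and output $\bigcup_{j} L(s_j')\times\{j\} \in \mathcal{O}$ (the output proposition $o$ of process $j$ is the signal $(o,j)$). The induced computation tree maps $t \in \mathcal{I}^*$ to the output of the state of the composed machine reached after reading $t$ from the initial state. *)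

(* Defs.v *)
From HB Require Import structures.
From mathcomp Require Import all_boot all_order all_algebra.
Set Implicit Arguments. Unset Strict Implicit. Unset Printing Implicit Defensive.
Import GRing.Theory Num.Theory.

Definition rot (A : finType) (n : nat) (u : {set A * 'I_n}) (k : int)
  : {set A * 'I_n} :=
  [set x : A * 'I_n | [exists y in u,
     (x.1 == y.1) && (Posz (nat_of_ord x.2) == intdiv.modz (Posz (nat_of_ord y.2) + k)%R (Posz n))]].

Definition rotw (A : finType) (n : nat) (t : seq {set A * 'I_n}) (k : int) :=
  map (fun u => rot u k) t.

Definition subtree (I O : Type) (tau : seq I -> O) (th : seq I) : seq I -> O :=
  fun t => tau (th ++ t).

Definition regular_tree (I O : Type) (tau : seq I -> O) : Prop :=
  exists (m : nat) (f : 'I_m -> (seq I -> O)),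
    forall th : seq I, exists i : 'I_m, subtree tau th = f i.

Definition symmetric_tree (API APO : finType) (n : nat)
  (tau : seq {set API * 'I_n} -> {set APO * 'I_n}) : Prop :=
  forall (t : seq {set API * 'I_n}) (i : 'I_n),
    tau (rotw t (Posz (nat_of_ord i))) = rot (tau t) (Posz (nat_of_ord i)).

Record moore (I : Type) (APO : finType) := Moore {
  mstate : finType;
  mdelta : mstate -> I -> mstate;
  minit : mstate;
  mlab : mstate -> {set APO}
}.

Section Arch.
Variables (API APO : finType) (n : nat) (M : moore {set API * 'I_n} APO).

Definition arch_step (st : {ffun 'I_n -> mstate M}) (x : {set API * 'I_n})
  : {ffun 'I_n -> mstate M} :=
  [ffun j : 'I_n => mdelta (st j) (rot x (- Posz (nat_of_ord j))%R)].

Definition arch_init : {ffun 'I_n -> mstate M} := [ffun _ => minit M].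

Definition arch_out (st : {ffun 'I_n -> mstate M}) : {set APO * 'I_n} :=
  [set x : APO * 'I_n | x.1 \in mlab (st x.2)].

Definition arch_tree (t : seq {set API * 'I_n}) : {set APO * 'I_n} :=
  arch_out (foldl arch_step arch_init t).
End Arch.

(* Main.v *)
Require Import Defs.
From mathcomp Require Import all_boot all_order all_algebra.
From mathcomp Require Import zify.
From Stdlib Require Import ClassicalEpsilon FunctionalExtensionality.
Set Implicit Arguments. Unset Strict Implicit. Unset Printing Implicit Defensive.
Import GRing.Theory Num.Theory.

Section Rot.
Variables (n : nat) (hn : (0 < n)%N).
Local Open Scope ring_scope.

Lemma shP (a : int) (j : 'I_n) : (absz (intdiv.modz (Posz j + a) (Posz n)) < n)%N.
Proof.
have h1 := @intdiv.modz_ge0 (Posz j + a) (Posz n).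
have h2 := @intdiv.ltz_pmod (Posz j + a) (Posz n).
have hn' : (Posz n != 0) by rewrite eqz_nat -lt0n.
have hn'' : (0 < Posz n) by rewrite ltz_nat.
have := h1 hn'; have := h2 hn''. lia.
Qed.

Definition sh (a : int) (j : 'I_n) : 'I_n := Ordinal (shP a j).

Lemma sh_val a j : Posz (sh a j) = intdiv.modz (Posz j + a) (Posz n).
Proof.
rewrite /= gez0_abs // intdiv.modz_ge0 // eqz_nat -lt0n //.
Qed.

Lemma sh_comp a b j : sh b (sh a j) = sh (a + b) j.
Proof.
apply: val_inj; apply/eqP; rewrite -eqz_nat -!/(nat_of_ord _) !sh_val.
by rewrite intdiv.modzDml addrA.
Qed.

Lemma sh0 j : sh 0 j = j.
Proof.
apply: val_inj; apply/eqP; rewrite -eqz_nat -!/(nat_of_ord _) !sh_val addr0.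
by rewrite intdiv.modz_small // ltz_nat ltn_ord andbT.
Qed.

Lemma sh_mod a j : sh a j = sh (intdiv.modz a (Posz n)) j.
Proof.
apply: val_inj; apply/eqP; rewrite -eqz_nat -!/(nat_of_ord _) !sh_val.
by rewrite intdiv.modzDmr.
Qed.

Lemma sh_inj a : injective (sh a).
Proof.
move=> x y e. by rewrite -(sh0 x) -(sh0 y) -(subrr a) -!sh_comp e.
Qed.

Lemma rotE (A : finType) (u : {set A * 'I_n}) a :
  Defs.rot u a = [set (y.1, sh a y.2) | y in u].
Proof.
apply/setP => x; rewrite inE; apply/existsP/imsetP.
- move=> [y /andP [yu /andP [/eqP e1 /eqP e2]]]; exists y => //.
  case: x e1 e2 => x1 x2 /= -> e2; congr pair; apply: val_inj; apply/eqP.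
  by rewrite -eqz_nat -!/(nat_of_ord _) sh_val e2.
- move=> [y yu ->]; exists y; rewrite yu /= eqxx /=.
  by rewrite -!/(nat_of_ord _) sh_val.
Qed.

Lemma rot_comp (A : finType) (u : {set A * 'I_n}) a b :
  Defs.rot (Defs.rot u a) b = Defs.rot u (a + b).
Proof.
rewrite !rotE -imset_comp; apply: eq_imset => y /=; by rewrite sh_comp.
Qed.

Lemma rot0 (A : finType) (u : {set A * 'I_n}) : Defs.rot u 0 = u.
Proof.
rewrite rotE -[RHS]imset_id; apply: eq_imset => -[y1 y2] /=; by rewrite sh0.
Qed.

Lemma rot_mod (A : finType) (u : {set A * 'I_n}) a :
  Defs.rot u a = Defs.rot u (intdiv.modz a (Posz n)).
Proof. by rewrite !rotE; apply: eq_imset => y; rewrite -sh_mod. Qed.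

Lemma rotw_comp (A : finType) (t : seq {set A * 'I_n}) a b :
  rotw (rotw t a) b = rotw t (a + b).
Proof. rewrite /rotw -map_comp; apply: eq_map => x /=; exact: rot_comp. Qed.

Lemma rotw0 (A : finType) (t : seq {set A * 'I_n}) : rotw t 0 = t.
Proof. rewrite /rotw -[RHS]map_id; apply: eq_map => x; exact: rot0. Qed.

End Rot.

Section ArchProps.
Variables (API APO : finType) (n : nat) (hn : (0 < n)%N)
  (M : moore {set API * 'I_n} APO).
Local Open Scope ring_scope.

Lemma arch_proc t (st : {ffun 'I_n -> mstate M}) j :
  (foldl (@arch_step _ _ _ M) st t) j
  = foldl (@mdelta _ _ M) (st j) (rotw t (- Posz j)).
Proof.
elim: t st => [|x t IH] st //=. by rewrite IH ffunE.
Qed.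

Definition stsh (i : int) (st : {ffun 'I_n -> mstate M}) : {ffun 'I_n -> mstate M} :=
  [ffun j => st (sh hn (- i) j)].

Lemma step_sh (i : int) st x :
  arch_step (stsh i st) (Defs.rot x i) = stsh i (arch_step st x).
Proof.
apply/ffunP => j; rewrite !ffunE (rot_comp hn).
congr mdelta.
rewrite (rot_mod hn x (i + _)) (rot_mod hn x (- _)).
rewrite -!/(nat_of_ord _) (sh_val hn) intdiv.modzNm.
by rewrite opprD opprK addrC.
Qed.

Lemma fold_sh (i : int) t st :
  foldl (@arch_step _ _ _ M) (stsh i st) (rotw t i)
  = stsh i (foldl (@arch_step _ _ _ M) st t).
Proof.
elim: t st => [|x t IH] st //=. by rewrite -IH step_sh.
Qed.

Lemma out_sh (i : int) st : arch_out (stsh i st) = Defs.rot (arch_out st) i.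
Proof.
rewrite (rotE hn); apply/setP => x; rewrite inE ffunE; apply/idP/imsetP.
- move=> h; exists (x.1, sh hn (- i) x.2); first by rewrite inE.
  by rewrite /= sh_comp addNr sh0; case: x {h}.
- move=> [y]; rewrite inE => hy ->. by rewrite /= sh_comp addrN sh0.
Qed.

Lemma arch_sym : symmetric_tree (arch_tree M).
Proof.
move=> t i; rewrite /arch_tree.
have e : arch_init M = stsh (Posz i) (arch_init M) by apply/ffunP => j; rewrite !ffunE.
by rewrite {1}e fold_sh out_sh.
Qed.

Lemma arch_reg : regular_tree (arch_tree M).
Proof.
exists #|{: {ffun 'I_n -> mstate M}}|.
exists (fun k => fun t => arch_out (foldl (@arch_step _ _ _ M) (enum_val k) t)).
move=> th; exists (enum_rank (foldl (@arch_step _ _ _ M) (arch_init M) th)).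
apply: functional_extensionality => t.
by rewrite enum_rankK /subtree /arch_tree foldl_cat.
Qed.

End ArchProps.

Theorem lemma5 (API APO : finType) (n : nat) (hn : 0 < n)
  (tau : seq {set API * 'I_n} -> {set APO * 'I_n}) :
  (regular_tree tau /\ symmetric_tree tau) <->
  exists M : moore {set API * 'I_n} APO, tau = arch_tree M.
Proof.
split; last first.
  by move=> [M ->]; split; [exact: arch_reg | exact: (arch_sym hn)].
move=> [[m [f hreg]] hsym].
have [i0 hi0] := hreg [::].
pose delta (k : 'I_m) (x : {set API * 'I_n}) : 'I_m :=
  epsilon (inhabits i0) (fun k' => f k' = fun t => f k (x :: t)).
have inv : forall t s th0, f s = subtree tau th0 ->
    f (foldl delta s t) = subtree tau (th0 ++ t).
  elim=> [|x t IH] s th0 hs /=; first by rewrite cats0.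
  rewrite -cat_rcons; apply: IH.
  have [k hk] := hreg (rcons th0 x).
  have sp : exists k', f k' = fun t => f s (x :: t).
    exists k; rewrite -hk hs; apply: functional_extensionality => t'.
    by rewrite /subtree cat_rcons.
  rewrite (epsilon_spec (inhabits i0) _ sp) hs.
  apply: functional_extensionality => t'. by rewrite /subtree cat_rcons.
pose z0 : 'I_n := Ordinal hn.
pose lab (k : 'I_m) : {set APO} := [set o | (o, z0) \in f k [::]].
exists (Moore delta i0 lab).
apply: functional_extensionality => t.
apply/setP => -[o j]; rewrite /arch_tree /arch_out inE /= (@arch_proc _ _ _ (Moore delta i0 lab)) ffunE /=.
rewrite /lab inE (inv _ _ [::] (esym hi0)) /subtree /= cats0.
set S := tau (rotw _ _).
have -> : tau t = Defs.rot S (Posz j).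
  by rewrite /S -hsym rotw_comp // addNr rotw0.
rewrite (rotE hn); apply/imsetP/idP.
- move=> [y hy [-> ej]].
  have : y.2 = z0.
    apply: (sh_inj (a := Posz j)); rewrite -ej.
    apply: val_inj; apply/eqP; rewrite -eqz_nat -!/(nat_of_ord _) sh_val /= add0r.
    by rewrite intdiv.modz_small // ltz_nat ltn_ord andbT.
  by case: y hy {ej} => y1 y2 hy /= e; rewrite -e.
- move=> h; exists (o, z0) => //; congr pair.
  apply: val_inj; apply/eqP; rewrite -eqz_nat -!/(nat_of_ord _) sh_val /= add0r.
  by rewrite intdiv.modz_small // ltz_nat ltn_ord andbT.
Qed.
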